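(* Let $0<s\le1$ and let $\beta\in(1,2)$ be such that the $\beta$-expansion of $1$ terminates; fix $m\in\mathbb N$, $\bar p\in[0,1]^{2^m}$ and $\epsilon>0$. Let $Q(s,\beta)=\beta^{-s}\sum_{i=0}^\infty(1-\beta^{-1})^{is}$. Suppose there are a strictly increasing sequence $(M_k)$ of natural numbers and $0\le c<1$ such that \[ N^s_\infty\big([0,1)\cap G^{\beta,m}_{\bar p}(M_k,\epsilon)\big)<\frac{c}{2Q(s,\beta)}\quad\text{for all }k. \] Then for each cylinder $C$ of $f_\beta$ there is $K_C$ such that $N^s_\infty\big(C\cap G^{\beta,m}_{\bar p}(M_k,\epsilon/2)\big)<c|C|^s$ for all $k>K_C$.
   Context: For $\beta\in(1,2)$ let $f_\beta(x)=\beta x \bmod 1$ on $[0,1)$ and $d_n(x,\beta)=\lfloor \beta f_\beta^n(x)\rfloor$, $n\ge0$; $(x_n)_{n\ge0}=(d_n(x,\beta))_{n\ge0}\in\{0,1\}^{\mathbb N}$ is the $\beta$-expansion of $x$. The expansion of $1$ terminates if $d(1,\beta)=j_0\dots j_{k-1}0^\infty$. A cylinder of generation $n$ is a nonempty set $[i_0\cdots i_{n-1}]=\{x\in[0,1): d_k(x,\beta)=i_k,\ 0\le k<n\}$. For a word $w$ of length $m$ and $n>m$, $\tau^\beta_w(x,n)=\#\{i\in\{0,\dots,n-m-1\}: x_i\dots x_{i+m-1}=w\}$; enumerating binary words of length $m$ as $w_1,\dots,w_{2^m}$, $G^{\beta,m}_{\bar p}(n,\epsilon)=\{x\in[0,1):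 p_{w_j}-\epsilon<\tau^\beta_{w_j}(x,n)/(n-m)<p_{w_j}+\epsilon,\ j=1,\dots,2^m\}$. $N^s_\infty(F)=\inf\{\sum_i|C_i|^s: F\subset\bigcup_iC_i\}$, the infimum over countable covers by cylinders of $f_\beta$. *)

(* Defs.v *)
From Stdlib Require Import Reals Lra Lia ZArith Arith List Classical ClassicalEpsilon.
Open Scope R_scope.

Definition fbeta (beta x : R) : R := frac_part (beta * x).

Definition fiter (beta : R) (n : nat) (x : R) : R := Nat.iter n (fbeta beta) x.

Definition digit (beta : R) (n : nat) (x : R) : Z := Int_part (beta * fiter beta n x).

Definition expansion_of_one_terminates (beta : R) : Prop :=
  exists k : nat, forall n : nat, (k <= n)%nat -> digit beta n 1 = 0%Z.

Definition cyl_set (beta : R) (w : list Z) (x : R) : Prop :=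
  0 <= x < 1 /\ forall k : nat, (k < length w)%nat -> digit beta k x = nth k w 0%Z.

Definition is_cyl_word (beta : R) (w : list Z) : Prop := exists x, cyl_set beta w x.

Definition is_cylinder (beta : R) (C : R -> Prop) : Prop :=
  exists w : list Z, is_cyl_word beta w /\ forall x, C x <-> cyl_set beta w x.

(* supremum / infimum of a set of reals (meaningful when they exist) *)
Definition Rsup (E : R -> Prop) : R := epsilon (inhabits 0) (fun l => is_lub E l).

Definition is_lower_bound (E : R -> Prop) (m : R) : Prop := forall x, E x -> m <= x.
Definition is_glb (E : R -> Prop) (m : R) : Prop :=
  is_lower_bound E m /\ forall b, is_lower_bound E b -> b <= m.
Definition Rinf (E : R -> Prop) : R := epsilon (inhabits 0) (fun l => is_glb E l).

Definition diam (C : R -> Prop) : R :=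
  Rsup (fun d => exists x y, C x /\ C y /\ d = Rabs (x - y)).

(* d^s, with the convention 0^s = 0 *)
Definition pow_s (s d : R) : R := if Rlt_dec 0 d then Rpower d s else 0.

(* cost of a cover element: None = no set (allows finite covers) *)
Definition cover_cost (beta s : R) (o : option (list Z)) : R :=
  match o with
  | None => 0
  | Some w => pow_s s (diam (cyl_set beta w))
  end.

Definition cover_value (beta s : R) (F : R -> Prop) (t : R) : Prop :=
  exists W : nat -> option (list Z),
    (forall i w, W i = Some w -> is_cyl_word beta w) /\
    (forall x, F x -> exists i w, W i = Some w /\ cyl_set beta w x) /\
    infinite_sum (fun i => cover_cost beta s (W i)) t.

Definition Ninf (beta s : R) (F : R -> Prop) : R := Rinf (cover_value beta s F).

Definition Qsb (s beta : R) : R :=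
  Rpower beta (- s) *
  epsilon (inhabits 0)
    (fun l => infinite_sum (fun i => Rpower (1 - / beta) (INR i * s)) l).

Definition binary_word (m : nat) (w : list Z) : Prop :=
  length w = m /\ Forall (fun a => a = 0%Z \/ a = 1%Z) w.

Definition occurs_at (beta x : R) (w : list Z) (i : nat) : bool :=
  forallb (fun j => Z.eqb (digit beta (i + j) x) (nth j w 0%Z)) (seq 0 (length w)).

Definition tau (beta : R) (w : list Z) (x : R) (n : nat) : nat :=
  length (filter (occurs_at beta x w) (seq 0 (n - length w))).

(* G^{beta,m}_{pbar}(n, eps); pbar is indexed by binary words of length m *)
Definition Gset (beta : R) (m : nat) (pbar : list Z -> R) (n : nat) (eps : R)
  (x : R) : Prop :=
  0 <= x < 1 /\
  forall w, binary_word m w ->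
    pbar w - eps < INR (tau beta w x n) / (INR n - INR m) < pbar w + eps.

(* Main.v *)
Require Import Defs.
From Stdlib Require Import Reals.
From Stdlib Require Import Lra Lia ZArith Arith List Classical ClassicalEpsilon.
From Stdlib Require Import FunctionalExtensionality.
Open Scope R_scope.

Lemma Int_part_unique r (z : Z) : IZR z <= r < IZR z + 1 -> Int_part r = z.
Proof.
  intros [H1 H2]. unfold Int_part.
  assert (z + 1 = up r)%Z.
  { apply tech_up; rewrite plus_IZR; simpl; lra. }
  lia.
Qed.

Lemma Int_part_nonneg r : 0 <= r -> (0 <= Int_part r)%Z.
Proof.
  intros H. destruct (base_Int_part r) as [_ H2].
  assert (IZR (Int_part r) > -1) by lra.
  apply lt_IZR in H0. lia.
Qed.

Lemma fbeta_eq beta y : fbeta beta y = beta * y - IZR (Int_part (beta * y)).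
Proof. reflexivity. Qed.

Lemma fiter_S beta n x : fiter beta (S n) x = fbeta beta (fiter beta n x).
Proof. reflexivity. Qed.

Lemma fiter_S' beta n x :
  fiter beta (S n) x = beta * fiter beta n x - IZR (digit beta n x).
Proof. reflexivity. Qed.

Lemma fiter_range beta n x : 0 <= x < 1 -> 0 <= fiter beta n x < 1.
Proof.
  intros H. destruct n. simpl. exact H.
  rewrite fiter_S. unfold fbeta. destruct (base_fp (beta * fiter beta n x)). lra.
Qed.

Lemma fiter_add beta a b x : fiter beta (a + b) x = fiter beta a (fiter beta b x).
Proof. unfold fiter. apply Nat.iter_add. Qed.

Lemma digit_shift beta N k x : digit beta k (fiter beta N x) = digit beta (N + k) x.
Proof. unfold digit. rewrite Nat.add_comm, fiter_add. reflexivity. Qed.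

Lemma digit_nonneg beta n x : 0 < beta -> 0 <= x < 1 -> (0 <= digit beta n x)%Z.
Proof.
  intros Hb Hx. unfold digit. apply Int_part_nonneg.
  pose proof (fiter_range beta n x Hx). nra.
Qed.

Lemma digit_spec beta n x :
  IZR (digit beta n x) <= beta * fiter beta n x < IZR (digit beta n x) + 1.
Proof. unfold digit. destruct (base_Int_part (beta * fiter beta n x)). lra. Qed.

Lemma fiter_diff beta N u u' :
  (forall k, (k < N)%nat -> digit beta k u = digit beta k u') ->
  fiter beta N u - fiter beta N u' = beta ^ N * (u - u').
Proof.
  induction N; intros H.
  - simpl. ring.
  - rewrite !fiter_S'. rewrite (H N) by lia.
    rewrite <- tech_pow_Rmult.
    assert (fiter beta N u - fiter beta N u' = beta ^ N * (u - u')).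
    { apply IHN. intros; apply H; lia. }
    replace (beta * fiter beta N u - IZR (digit beta N u') -
      (beta * fiter beta N u' - IZR (digit beta N u')))
      with (beta * (fiter beta N u - fiter beta N u')) by ring.
    rewrite H0. ring.
Qed.

Lemma up_lemma beta N x : 1 < beta -> 0 <= x < 1 ->
  exists delta, 0 < delta /\ forall t, 0 <= t < delta ->
    0 <= x + t < 1 /\ (forall k, (k < N)%nat -> digit beta k (x + t) = digit beta k x)
    /\ fiter beta N (x + t) = fiter beta N x + beta ^ N * t.
Proof.
  intros Hb Hx. induction N.
  - exists (1 - x). split. lra. intros t Ht. split. lra. split. intros; lia. simpl. ring.
  - destruct IHN as [d [Hd Hi]].
    set (y := fiter beta N x).
    pose proof (digit_spec beta N x) as Hs. fold y in Hs.
    assert (Hp : 0 < beta ^ S N) by (apply pow_lt; lra).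
    exists (Rmin d ((IZR (digit beta N x) + 1 - beta * y) / beta ^ S N)).
    split.
    { apply Rmin_pos. lra. apply Rdiv_lt_0_compat; lra. }
    intros t Ht.
    assert (Ht1 : t < d) by (pose proof (Rmin_l d ((IZR (digit beta N x) + 1 - beta * y) / beta ^ S N)); lra).
    assert (Ht2 : t < (IZR (digit beta N x) + 1 - beta * y) / beta ^ S N)
      by (pose proof (Rmin_r d ((IZR (digit beta N x) + 1 - beta * y) / beta ^ S N)); lra).
    destruct (Hi t ltac:(lra)) as [Hr [Hdg Hf]].
    assert (Hb2 : beta ^ S N * t < IZR (digit beta N x) + 1 - beta * y).
    { apply (Rmult_lt_compat_l (beta ^ S N)) in Ht2; [|lra].
      unfold Rdiv in Ht2. rewrite (Rmult_comm (_ - _)), <- Rmult_assoc, Rinv_r, Rmult_1_l in Ht2; lra. }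
    assert (HdN : digit beta N (x + t) = digit beta N x).
    { unfold digit at 1. rewrite Hf. apply Int_part_unique. fold y.
      assert (beta * (y + beta ^ N * t) = beta * y + beta ^ S N * t) by (simpl; ring).
      assert (0 <= beta ^ S N * t) by nra.
      split; lra. }
    split. exact Hr. split.
    + intros k Hk. destruct (Nat.eq_dec k N). subst. exact HdN. apply Hdg. lia.
    + rewrite !fiter_S', HdN, Hf. simpl. ring.
Qed.

Lemma down_lemma beta N x t : 1 < beta -> 0 <= x < 1 ->
  0 <= t -> beta ^ N * t <= fiter beta N x ->
    0 <= x - t < 1 /\ (forall k, (k < N)%nat -> digit beta k (x - t) = digit beta k x)
    /\ fiter beta N (x - t) = fiter beta N x - beta ^ N * t.
Proof.
  intros Hb Hx Ht. revert t Ht. induction N; intros t Ht HtN.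
  - simpl in *. split. lra. split. intros; lia. ring.
  - set (y := fiter beta N x).
    pose proof (digit_spec beta N x) as Hs. fold y in Hs.
    pose proof (digit_nonneg beta N x ltac:(lra) Hx) as Hd0. apply IZR_le in Hd0.
    rewrite fiter_S' in HtN. fold y in HtN. simpl in HtN.
    assert (Hp : 0 < beta ^ N) by (apply pow_lt; lra).
    assert (HtN' : beta ^ N * t <= y).
    { apply (Rmult_le_reg_l beta). lra. rewrite <- Rmult_assoc. lra. }
    destruct (IHN t Ht HtN') as [Hr [Hdg Hf]].
    assert (HdN : digit beta N (x - t) = digit beta N x).
    { unfold digit at 1. rewrite Hf. apply Int_part_unique. fold y.
      assert (beta * (y - beta ^ N * t) = beta * y - beta * beta ^ N * t) by ring.
      assert (0 <= beta * beta ^ N * t) by (apply Rmult_le_pos; nra).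
      split; lra. }
    split. exact Hr. split.
    + intros k Hk. destruct (Nat.eq_dec k N). subst. exact HdN. apply Hdg. lia.
    + rewrite !fiter_S', HdN, Hf. simpl. ring.
Qed.

Definition dset (C : R -> Prop) (d : R) : Prop := exists x y, C x /\ C y /\ d = Rabs (x - y).

Lemma diam_lub (C : R -> Prop) : (exists x, C x) -> (forall x, C x -> 0 <= x < 1) ->
  is_lub (dset C) (diam C).
Proof.
  intros [x0 Hx0] HC. unfold diam, Rsup.
  apply epsilon_spec.
  destruct (completeness (dset C)) as [l Hl].
  - exists 1. intros d [x [y [Hx [Hy ->]]]]. apply HC in Hx. apply HC in Hy.
    unfold Rabs; destruct Rcase_abs; lra.
  - exists 0. exists x0, x0. repeat split; auto. unfold Rminus. rewrite Rplus_opp_r, Rabs_R0. auto.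
  - exists l. exact Hl.
Qed.

Lemma diam_ge (C : R -> Prop) x y : (forall x, C x -> 0 <= x < 1) -> C x -> C y ->
  Rabs (x - y) <= diam C.
Proof.
  intros HC Hx Hy. destruct (diam_lub C (ex_intro _ x Hx) HC) as [H _].
  apply H. exists x, y. auto.
Qed.

Lemma diam_le (C : R -> Prop) b : (exists x, C x) -> (forall x, C x -> 0 <= x < 1) ->
  (forall x y, C x -> C y -> Rabs (x - y) <= b) -> diam C <= b.
Proof.
  intros Hne HC Hb. destruct (diam_lub C Hne HC) as [_ H].
  apply H. intros d [x [y [Hx [Hy ->]]]]. auto.
Qed.

Lemma diam_nonneg (C : R -> Prop) : (exists x, C x) -> (forall x, C x -> 0 <= x < 1) -> 0 <= diam C.
Proof.
  intros [x Hx] HC. eapply Rle_trans; [|apply (diam_ge C x x HC Hx Hx)]. apply Rabs_pos.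
Qed.

Lemma glb_exists (E : R -> Prop) : (exists x, E x) -> (forall x, E x -> 0 <= x) -> is_glb E (Rinf E).
Proof.
  intros [x0 Hx0] Hpos. unfold Rinf. apply epsilon_spec.
  destruct (completeness (fun y => E (- y))) as [l [Hl1 Hl2]].
  - exists 0. intros y Hy. apply Hpos in Hy. lra.
  - exists (- x0). rewrite Ropp_involutive. auto.
  - exists (- l). split.
    + intros x Hx. assert (- x <= l). apply Hl1. rewrite Ropp_involutive. auto. lra.
    + intros b Hb. assert (l <= - b). apply Hl2. intros y Hy. apply Hb in Hy. lra. lra.
Qed.

Lemma pow_s_nonneg s d : 0 <= pow_s s d.
Proof. unfold pow_s. destruct Rlt_dec. unfold Rpower. left. apply exp_pos. lra. Qed.

Lemma cover_cost_nonneg beta s o : 0 <= cover_cost beta s o.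
Proof. destruct o; simpl. apply pow_s_nonneg. lra. Qed.

Lemma infinite_sum_nonneg f l : (forall i, 0 <= f i) -> infinite_sum f l -> 0 <= l.
Proof.
  intros Hf Hl. apply Rle_cv_lim with (Un := fun _ => 0) (Vn := sum_f_R0 f).
  - intros n. induction n; simpl. apply Hf. pose proof (Hf (S n)). lra.
  - intros e He. exists 0%nat. intros. unfold R_dist. rewrite Rminus_diag, Rabs_R0. lra.
  - exact Hl.
Qed.

Lemma cover_value_nonneg beta s F t : cover_value beta s F t -> 0 <= t.
Proof.
  intros [W [_ [_ H]]]. eapply infinite_sum_nonneg; [|exact H].
  intros; apply cover_cost_nonneg.
Qed.

Lemma cover_value_exists beta s (F : R -> Prop) : (forall x, F x -> 0 <= x < 1) ->
  exists t, cover_value beta s F t.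
Proof.
  intros HF.
  set (W := fun i : nat => match i with O => Some (@nil Z) | _ => None end).
  exists (cover_cost beta s (W O)). exists W. split; [|split].
  - intros i w Hw. destruct i; simpl in Hw; inversion Hw. subst.
    exists 0. split. lra. simpl. intros; lia.
  - intros x Hx. exists O, nil. split. reflexivity. split. auto. simpl; intros; lia.
  - intros e He. exists O. intros n _.
    assert (sum_f_R0 (fun i => cover_cost beta s (W i)) n = cover_cost beta s (W O)).
    { induction n. reflexivity. simpl. rewrite IHn. simpl. ring. }
    rewrite H. unfold R_dist. rewrite Rminus_diag, Rabs_R0. lra.
Qed.

Lemma Ninf_glb beta s (F : R -> Prop) : (forall x, F x -> 0 <= x < 1) ->
  is_glb (cover_value beta s F) (Ninf beta s F).
Proof.
  intros HF. apply glb_exists. apply cover_value_exists; auto.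
  apply cover_value_nonneg.
Qed.

Lemma cnt_shift (g : nat -> bool) N a L :
  length (filter (fun i => g (N + i)%nat) (seq a L)) = length (filter g (seq (N + a) L)).
Proof.
  revert a. induction L; intros a. reflexivity.
  simpl. destruct (g (N + a)%nat); simpl; rewrite IHL;
  replace (N + S a)%nat with (S (N + a)) by lia; reflexivity.
Qed.

Lemma cnt_split (g : nat -> bool) a L1 L2 :
  length (filter g (seq a (L1 + L2))) =
  (length (filter g (seq a L1)) + length (filter g (seq (a + L1) L2)))%nat.
Proof. rewrite seq_app, filter_app, length_app. reflexivity. Qed.

Lemma cnt_le (g : nat -> bool) a L : (length (filter g (seq a L)) <= L)%nat.
Proof. rewrite <- (length_seq L a) at 2. apply filter_length_le. Qed.

Lemma occurs_shift beta x w N i :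
  occurs_at beta (fiter beta N x) w i = occurs_at beta x w (N + i).
Proof.
  unfold occurs_at. f_equal. apply functional_extensionality. intros j.
  rewrite digit_shift. replace (N + (i + j))%nat with (N + i + j)%nat by lia; reflexivity.
Qed.

Lemma tau_shift_bounds beta w x N M :
  (tau beta w (fiter beta N x) M <= tau beta w x M + N)%nat /\
  (tau beta w x M <= tau beta w (fiter beta N x) M + N)%nat.
Proof.
  unfold tau. set (L := (M - length w)%nat). set (g := occurs_at beta x w).
  assert (E : filter (occurs_at beta (fiter beta N x) w) (seq 0 L) =
              filter (fun i => g (N + i)%nat) (seq 0 L)).
  { apply filter_ext. intros i. apply occurs_shift. }
  rewrite E, cnt_shift. rewrite Nat.add_0_r.
  pose proof (cnt_split g 0 N L) as H1. pose proof (cnt_split g 0 L N) as H2.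
  rewrite Nat.add_comm in H2. rewrite H1 in H2. simpl in H2.
  pose proof (cnt_le g 0 N). pose proof (cnt_le g L N).
  rewrite Nat.add_0_l in *. lia.
Qed.

Lemma Gset_shift beta m pbar M eps N x :
  (m < M)%nat -> INR N / (INR M - INR m) < eps / 2 ->
  Gset beta m pbar M (eps / 2) x -> Gset beta m pbar M eps (fiter beta N x).
Proof.
  intros HmM HN [Hx HG]. split. apply fiter_range; auto.
  intros w Hw. specialize (HG w Hw). destruct Hw as [Hl _].
  destruct (tau_shift_bounds beta w x N M) as [B1 B2].
  apply le_INR in B1. apply le_INR in B2. rewrite plus_INR in B1, B2.
  assert (HD : 0 < INR M - INR m) by (apply lt_INR in HmM; lra).
  set (D := INR M - INR m) in *.
  set (a := INR (tau beta w x M)) in *. set (b := INR (tau beta w (fiter beta N x) M)) in *.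
  assert (b / D <= a / D + INR N / D) by (unfold Rdiv; rewrite <- Rmult_plus_distr_r;
    apply Rmult_le_compat_r; [left; apply Rinv_0_lt_compat; lra | lra]).
  assert (a / D <= b / D + INR N / D) by (unfold Rdiv; rewrite <- Rmult_plus_distr_r;
    apply Rmult_le_compat_r; [left; apply Rinv_0_lt_compat; lra | lra]).
  lra.
Qed.

Lemma pow_s_scale s l a b : 0 < s -> 0 < l -> a <= l * b ->
  pow_s s a <= Rpower l s * pow_s s b.
Proof.
  intros Hs Hl Hab. unfold pow_s at 1. destruct (Rlt_dec 0 a).
  - assert (Hb : 0 < b).
    { destruct (Rlt_dec 0 b). auto. assert (l * b <= 0) by nra. lra. }
    unfold pow_s. destruct (Rlt_dec 0 b); [|lra].
    rewrite Rpower_mult_distr by lra. apply Rle_Rpower_l. lra. lra.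
  - apply Rmult_le_pos. unfold Rpower. left; apply exp_pos. apply pow_s_nonneg.
Qed.

Lemma cyl_range beta w x : cyl_set beta w x -> 0 <= x < 1.
Proof. intros [H _]. exact H. Qed.

Lemma cyl_app_prop beta v d u :
  cyl_set beta (v ++ d) u ->
  (forall k, (k < length v)%nat -> digit beta k u = nth k v 0%Z) /\
  cyl_set beta d (fiter beta (length v) u).
Proof.
  intros [Hu Hd]. split.
  - intros k Hk. rewrite Hd by (rewrite length_app; lia). apply app_nth1. auto.
  - split. apply fiter_range; auto.
    intros k Hk. rewrite digit_shift. rewrite Hd by (rewrite length_app; lia).
    rewrite app_nth2 by lia. f_equal. lia.
Qed.

Lemma diam_app beta v d : 1 < beta -> is_cyl_word beta (v ++ d) ->
  diam (cyl_set beta (v ++ d)) <= / beta ^ length v * diam (cyl_set beta d).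
Proof.
  intros Hb [u0 Hu0]. set (N := length v).
  assert (HP : 0 < beta ^ N) by (apply pow_lt; lra).
  apply diam_le. eauto. apply cyl_range.
  intros x y Hx Hy.
  destruct (cyl_app_prop _ _ _ _ Hx) as [Hx1 Hx2].
  destruct (cyl_app_prop _ _ _ _ Hy) as [Hy1 Hy2].
  assert (E : fiter beta N x - fiter beta N y = beta ^ N * (x - y)).
  { apply fiter_diff. intros k Hk. rewrite Hx1, Hy1; auto. }
  assert (Hd : Rabs (fiter beta N x - fiter beta N y) <= diam (cyl_set beta d)).
  { apply diam_ge. apply cyl_range. auto. auto. }
  rewrite E, Rabs_mult, (Rabs_right (beta ^ N)) in Hd by lra.
  apply (Rmult_le_reg_l (beta ^ N)). auto.
  rewrite <- Rmult_assoc, Rinv_r, Rmult_1_l by lra. auto.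
Qed.

Lemma cover_transform beta s v (F F' : R -> Prop) b : 1 < beta -> 0 < s ->
  (forall x, F' x -> 0 <= x < 1 /\ (forall k, (k < length v)%nat -> digit beta k x = nth k v 0%Z)
        /\ F (fiter beta (length v) x)) ->
  cover_value beta s F b ->
  exists a, cover_value beta s F' a /\ a <= Rpower (/ beta ^ length v) s * b.
Proof.
  intros Hb Hs HF' [W [HW1 [HW2 HW3]]].
  set (N := length v). set (lam := Rpower (/ beta ^ N) s).
  assert (HP : 0 < beta ^ N) by (apply pow_lt; lra).
  assert (Hlam : 0 < lam) by (unfold lam, Rpower; apply exp_pos).
  set (W' := fun i => match W i with
                      | None => None
                      | Some d => if excluded_middle_informative (is_cyl_word beta (v ++ d))
                                  then Some (v ++ d) else None end).
  set (An := fun i => cover_cost beta s (W' i)).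
  set (Bn := fun i => cover_cost beta s (W i) * lam).
  assert (HAB : forall i, 0 <= An i <= Bn i).
  { intros i. split. apply cover_cost_nonneg. unfold An, Bn, W'.
    destruct (W i) as [d|] eqn:Ed; simpl.
    - destruct excluded_middle_informative as [Hc|Hc]; simpl.
      + rewrite Rmult_comm. apply pow_s_scale; auto. apply Rinv_0_lt_compat; auto.
        apply diam_app; auto.
      + rewrite Rmult_comm. apply Rmult_le_pos. lra. apply pow_s_nonneg.
    - lra. }
  assert (HBcv : Un_cv (fun n => sum_f_R0 Bn n) (lam * b)).
  { assert (E : (fun n => sum_f_R0 Bn n) = (fun n => lam * sum_f_R0 (fun i => cover_cost beta s (W i)) n)).
    { apply functional_extensionality. intros n. unfold Bn. rewrite scal_sum. reflexivity. }
    rewrite E. apply (CV_mult (fun _ => lam)). intros e He. exists O. intros.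
    unfold R_dist. rewrite Rminus_diag, Rabs_R0. lra. exact HW3. }
  destruct (Rseries_CV_comp An Bn HAB (exist _ _ HBcv)) as [a Ha].
  exists a. split.
  - exists W'. split; [|split].
    + intros i w Hw. unfold W' in Hw. destruct (W i); [|discriminate].
      destruct excluded_middle_informative; inversion Hw; subst; auto.
    + intros x Hx. destruct (HF' x Hx) as [Hx0 [Hxv HxF]].
      destruct (HW2 _ HxF) as [i [d [Hi Hcd]]].
      assert (Hc : cyl_set beta (v ++ d) x).
      { split. auto. intros k Hk. rewrite length_app in Hk.
        destruct (Nat.lt_ge_cases k N).
        - rewrite app_nth1 by auto. apply Hxv. auto.
        - rewrite app_nth2 by auto. destruct Hcd as [_ Hcd].
          rewrite <- Hcd by (fold N; lia). rewrite digit_shift. f_equal. fold N; lia. }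
      exists i, (v ++ d). split; auto. unfold W'. rewrite Hi.
      destruct excluded_middle_informative as [_|Hn]. reflexivity.
      exfalso. apply Hn. exists x. auto.
    + exact Ha.
  - apply Rle_cv_lim with (Un := fun n => sum_f_R0 An n) (Vn := fun n => sum_f_R0 Bn n); auto.
    intros n. apply sum_Rle. intros. apply HAB.
Qed.

Lemma Ninf_transform beta s v (F F' : R -> Prop) : 1 < beta -> 0 < s ->
  (forall x, F x -> 0 <= x < 1) ->
  (forall x, F' x -> 0 <= x < 1 /\ (forall k, (k < length v)%nat -> digit beta k x = nth k v 0%Z)
        /\ F (fiter beta (length v) x)) ->
  Ninf beta s F' <= Rpower (/ beta ^ length v) s * Ninf beta s F.
Proof.
  intros Hb Hs HF HF'.
  assert (HF'r : forall x, F' x -> 0 <= x < 1) by (intros x Hx; apply HF'; auto).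
  destruct (Ninf_glb beta s F HF) as [G1 G2].
  destruct (Ninf_glb beta s F' HF'r) as [G1' _].
  set (lam := Rpower (/ beta ^ length v) s).
  assert (Hlam : 0 < lam) by (unfold lam, Rpower; apply exp_pos).
  assert (Ninf beta s F' / lam <= Ninf beta s F).
  { apply G2. intros b Hbv. destruct (cover_transform beta s v F F' b Hb Hs HF' Hbv) as [a [Ha Hal]].
    apply G1' in Ha. fold lam in Hal.
    apply (Rmult_le_reg_l lam). auto. unfold Rdiv.
    rewrite (Rmult_comm (Ninf _ _ _)), <- Rmult_assoc, Rinv_r, Rmult_1_l by lra. lra. }
  apply (Rmult_le_compat_l lam) in H; [|lra].
  unfold Rdiv in H. rewrite (Rmult_comm (Ninf _ _ F')), <- Rmult_assoc, Rinv_r, Rmult_1_l in H by lra.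
  exact H.
Qed.

Lemma Rpower_base_lt1 u a b : 0 < u < 1 -> a <= b -> Rpower u b <= Rpower u a.
Proof.
  intros Hu Hab. unfold Rpower.
  assert (ln u < 0) by (rewrite <- ln_1; apply ln_increasing; lra).
  destruct (Req_dec a b). subst; lra. left. apply exp_increasing. nra.
Qed.

Lemma Q_bound s beta : 0 < s <= 1 -> 1 < beta < 2 ->
  0 < Qsb s beta /\ Rpower beta s <= 2 * Qsb s beta.
Proof.
  intros Hs Hb.
  set (u := 1 - / beta).
  assert (Hib : / beta < 1) by (rewrite <- Rinv_1; apply Rinv_lt_contravar; lra).
  assert (Hib' : / 2 < / beta) by (apply Rinv_lt_contravar; lra).
  assert (Hu : 0 < u < 1) by (unfold u; lra).
  set (r := Rpower u s).
  assert (Hr : u <= r < 1).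
  { split. unfold r. rewrite <- (Rpower_1 u) at 1 by lra. apply Rpower_base_lt1; lra.
    unfold r. rewrite <- (Rpower_O u) by lra. unfold Rpower. apply exp_increasing.
    assert (ln u < 0) by (rewrite <- ln_1; apply ln_increasing; lra). nra. }
  assert (HS : infinite_sum (fun i => Rpower u (INR i * s)) (/ (1 - r))).
  { pose proof (GP_infinite r ltac:(rewrite Rabs_right; lra)) as H.
    unfold Pser in H.
    replace (fun i => Rpower u (INR i * s)) with (fun n : nat => 1 * r ^ n). exact H.
    apply functional_extensionality. intros i. unfold r.
    rewrite <- Rpower_pow by (unfold Rpower; apply exp_pos).
    rewrite Rpower_mult, Rmult_1_l. f_equal. ring. }
  assert (ES : epsilon (inhabits 0) (fun l => infinite_sum (fun i => Rpower (1 - / beta) (INR i * s)) l)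
               = / (1 - r)).
  { apply (uniqueness_sum (fun i => Rpower u (INR i * s))).
    apply (epsilon_spec (inhabits 0) (fun l => infinite_sum (fun i => Rpower u (INR i * s)) l)).
    eauto. exact HS. }
  unfold Qsb. rewrite ES.
  assert (Hge : beta <= / (1 - r)).
  { replace beta with (/ (1 - u)) by (unfold u; field; lra).
    apply Rinv_le_contravar; lra. }
  assert (Hps : 0 < Rpower beta s) by (unfold Rpower; apply exp_pos).
  assert (Hpb : Rpower beta s <= beta).
  { rewrite <- (Rpower_1 beta) at 2 by lra. apply Rle_Rpower; lra. }
  rewrite Rpower_Ropp. split.
  - apply Rmult_lt_0_compat. apply Rinv_0_lt_compat; auto. lra.
  - apply (Rmult_le_reg_l (Rpower beta s)). auto.
    replace (Rpower beta s * (2 * (/ Rpower beta s * / (1 - r)))) with (2 * / (1 - r))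
      by (field; lra).
    nra.
Qed.

Lemma M_ge (M : nat -> nat) : (forall k, (M k < M (S k))%nat) -> forall k, (k <= M k)%nat.
Proof. intros HM k. induction k. lia. specialize (HM k). lia. Qed.

Lemma max_lemma (P : nat -> Prop) n : P n -> forall j, ~ P (n + j)%nat ->
  exists N, (n <= N)%nat /\ P N /\ ~ P (S N).
Proof.
  intros Hn j. induction j; intros Hj.
  - rewrite Nat.add_0_r in Hj. contradiction.
  - destruct (classic (P (n + j)%nat)) as [H|H].
    + exists (n + j)%nat. split. lia. split. auto. rewrite <- Nat.add_succ_r. auto.
    + apply IHj. auto.
Qed.

Lemma Rpower_inv b s : 0 < b -> Rpower (/ b) s = / Rpower b s.
Proof. intros Hb. rewrite <- Rpower_Ropp. unfold Rpower. rewrite ln_Rinv by auto. f_equal. ring. Qed.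

Theorem mainTheorem15
  (s beta : R) (m : nat) (pbar : list Z -> R) (eps c : R) (M : nat -> nat)
  (Hs : 0 < s <= 1)
  (Hbeta : 1 < beta < 2)
  (Hterm : expansion_of_one_terminates beta)
  (Hpbar : forall w, binary_word m w -> 0 <= pbar w <= 1)
  (Heps : 0 < eps)
  (HM : forall k, (M k < M (S k))%nat)
  (Hc : 0 <= c < 1)
  (HN : forall k, (m < M k)%nat ->
     Ninf beta s (fun x => (0 <= x < 1) /\ Gset beta m pbar (M k) eps x)
       < c / (2 * Qsb s beta)) :
  forall C : R -> Prop, is_cylinder beta C ->
    exists KC : nat, forall k : nat, (KC < k)%nat ->
      Ninf beta s (fun x => C x /\ Gset beta m pbar (M k) (eps / 2) x)
        < c * pow_s s (diam C).
Proof.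
  intros C [w [[x1 Hx1] HC]].
  set (n := length w).
  assert (HCr : forall x, C x -> 0 <= x < 1) by (intros x Hx; apply HC in Hx; apply Hx).
  assert (HCi : forall x, 0 <= x < 1 -> (forall k, (k < n)%nat -> digit beta k x = nth k w 0%Z) -> C x).
  { intros x Hx Hk. apply HC. split; auto. }
  destruct (up_lemma beta n x1 ltac:(lra) (proj1 Hx1)) as [dl [Hdl Hup]].
  set (t0 := dl / 2).
  destruct (Hup t0 ltac:(unfold t0; lra)) as [Hr0 [Hd0 _]].
  assert (HC1 : C x1) by (apply HC; auto).
  assert (HC2 : C (x1 + t0)).
  { apply HCi. auto. intros k Hk. rewrite Hd0 by auto. apply Hx1. auto. }
  set (P := fun N => forall x x', C x -> C x' -> forall k, (k < N)%nat -> digit beta k x = digit beta k x').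
  assert (Pn : P n).
  { intros x x' Hx Hx' k Hk. apply HC in Hx. apply HC in Hx'.
    rewrite (proj2 Hx), (proj2 Hx'); auto. }
  assert (Pbound : forall N, P N -> beta ^ N * t0 < 1).
  { intros N HP. pose proof (fiter_diff beta N (x1 + t0) x1 (HP _ _ HC2 HC1)) as E.
    pose proof (fiter_range beta N _ Hr0). pose proof (fiter_range beta N _ (HCr _ HC1)).
    replace (x1 + t0 - x1) with t0 in E by ring. lra. }
  destruct (Pow_x_infinity beta ltac:(rewrite Rabs_right; lra) (/ t0)) as [B HB].
  assert (HnotB : ~ P (n + B)%nat).
  { intros HP. apply Pbound in HP. specialize (HB (n + B)%nat ltac:(lia)).
    rewrite Rabs_right in HB by (left; apply pow_lt; lra).
    assert (0 < t0) by (unfold t0; lra).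
    assert (/ t0 * t0 <= beta ^ (n + B) * t0) by (apply Rmult_le_compat_r; lra).
    rewrite Rinv_l in H0 by lra. lra. }
  destruct (max_lemma P n Pn B HnotB) as [N [HnN [HPN HPSN]]].
  assert (Hxa : exists xa, C xa /\ 1 <= beta * fiter beta N xa).
  { apply NNPP. intros Hno. apply HPSN. intros x x' Hx Hx' k Hk.
    destruct (Nat.lt_ge_cases k N). apply HPN; auto.
    assert (k = N) by lia. subst k.
    assert (forall y, C y -> digit beta N y = 0%Z).
    { intros y Hy. pose proof (digit_nonneg beta N y ltac:(lra) (HCr _ Hy)).
      destruct (Z.eq_dec (digit beta N y) 0) as [|Hne]; auto. exfalso. apply Hno.
      exists y. split; auto. pose proof (digit_spec beta N y).
      assert (1 <= IZR (digit beta N y)) by (apply IZR_le; lia). lra. }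
    rewrite !H0; auto. }
  destruct Hxa as [xa [HCa Ha1]].
  assert (HbN : 0 < beta ^ N) by (apply pow_lt; lra).
  assert (Hdiam : / beta ^ N * / beta <= diam C).
  { set (t := fiter beta N xa / beta ^ N).
    destruct (down_lemma beta N xa t ltac:(lra) (HCr _ HCa)) as [Hr' [Hd' _]].
    - unfold t. apply Rmult_le_pos. apply fiter_range, HCr, HCa. left; apply Rinv_0_lt_compat; auto.
    - unfold t, Rdiv. rewrite (Rmult_comm (fiter _ _ _)), <- Rmult_assoc, Rinv_r, Rmult_1_l by lra. lra.
    - assert (C (xa - t)).
      { apply HCi. auto. intros k Hk. rewrite Hd' by lia. apply HC in HCa. apply HCa. auto. }
      eapply Rle_trans; [|apply (diam_ge C xa (xa - t) HCr HCa H)].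
      replace (xa - (xa - t)) with t by ring. rewrite Rabs_right.
      + unfold t, Rdiv. rewrite (Rmult_comm (fiter _ _ _)). apply Rmult_le_compat_l.
        left; apply Rinv_0_lt_compat; auto.
        apply (Rmult_le_reg_l beta). lra. rewrite Rinv_r by lra. lra.
      + unfold t. apply Rle_ge, Rmult_le_pos. apply fiter_range, HCr, HCa.
        left; apply Rinv_0_lt_compat; auto. }
  set (v := map (fun j => digit beta j xa) (seq 0 N)).
  assert (Hvl : length v = N) by (unfold v; rewrite length_map, length_seq; auto).
  assert (Hvn : forall k, (k < N)%nat -> nth k v 0%Z = digit beta k xa).
  { intros k Hk. unfold v. rewrite (nth_indep _ _ ((fun j => digit beta j xa) 0%nat))
      by (rewrite length_map, length_seq; auto).
    pose proof (map_nth (fun j => digit beta j xa) (seq 0 N) 0%nat k) as E. cbv beta in E.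
    rewrite E, seq_nth by auto. reflexivity. }
  destruct (INR_archimed 1 (INR m + 2 * INR N / eps) ltac:(lra)) as [K HK].
  rewrite Rmult_1_r in HK.
  exists K. intros k Hk.
  pose proof (M_ge M HM k) as HMk.
  assert (HMK : INR m + 2 * INR N / eps < INR (M k)).
  { assert (INR K < INR (M k)) by (apply lt_INR; lia). lra. }
  assert (HNpos : 0 <= 2 * INR N / eps) by (apply Rmult_le_pos; [pose proof (pos_INR N); lra | left; apply Rinv_0_lt_compat; lra]).
  assert (HmM : (m < M k)%nat) by (apply INR_lt; lra).
  assert (Hfrac : INR N / (INR (M k) - INR m) < eps / 2).
  { assert (HD : 0 < INR (M k) - INR m) by lra.
    apply (Rmult_lt_reg_r (INR (M k) - INR m)). auto.
    unfold Rdiv. rewrite Rmult_assoc, Rinv_l, Rmult_1_r by lra.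
    assert (INR N = eps / 2 * (2 * INR N / eps)) by (field; lra).
    rewrite H at 1. apply Rmult_lt_compat_l; lra. }
  pose proof (Ninf_transform beta s v
     (fun x => (0 <= x < 1) /\ Gset beta m pbar (M k) eps x)
     (fun x => C x /\ Gset beta m pbar (M k) (eps / 2) x)
     ltac:(lra) ltac:(lra) ltac:(intros x Hx; apply Hx)) as HT.
  rewrite Hvl in HT.
  assert (HT' : Ninf beta s (fun x => C x /\ Gset beta m pbar (M k) (eps / 2) x) <=
                Rpower (/ beta ^ N) s * Ninf beta s (fun x => (0 <= x < 1) /\ Gset beta m pbar (M k) eps x)).
  { apply HT. intros x [Hx HG]. split. auto. split.
    - intros kk Hkk. rewrite Hvn by auto. apply HPN; auto.
    - split. apply fiter_range; auto. apply Gset_shift; auto. }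
  clear HT.
  specialize (HN k HmM).
  destruct (Q_bound s beta Hs Hbeta) as [HQ0 HQ].
  set (lam := Rpower (/ beta ^ N) s) in *.
  assert (Hlam : 0 < lam) by (unfold lam, Rpower; apply exp_pos).
  assert (Hps : 0 < Rpower beta s) by (unfold Rpower; apply exp_pos).
  assert (H1 : c / (2 * Qsb s beta) <= c / Rpower beta s).
  { unfold Rdiv. apply Rmult_le_compat_l. lra. apply Rinv_le_contravar; auto. }
  assert (Hdpos : 0 < diam C).
  { eapply Rlt_le_trans; [|exact Hdiam]. apply Rmult_lt_0_compat; apply Rinv_0_lt_compat; lra. }
  assert (H2 : lam / Rpower beta s <= pow_s s (diam C)).
  { unfold pow_s. destruct (Rlt_dec 0 (diam C)); [|lra].
    unfold lam, Rdiv. rewrite <- Rpower_inv by lra.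
    rewrite Rpower_mult_distr by (apply Rinv_0_lt_compat; lra).
    apply Rle_Rpower_l. lra. split; auto. apply Rmult_lt_0_compat; apply Rinv_0_lt_compat; lra. }
  apply Rle_lt_trans with (1 := HT').
  apply Rlt_le_trans with (lam * (c / Rpower beta s)).
  - apply Rmult_lt_compat_l. auto. lra.
  - replace (lam * (c / Rpower beta s)) with (c * (lam / Rpower beta s)) by (field; lra).
    apply Rmult_le_compat_l; lra.
Qed.
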